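(* Let $T_1^f$ and $T_2^g$ be merge trees with node sets $V(T_1)$ and $V(T_2)$. Let $\Lambda_1 = \{|f(u)-g(w)| : u\in V(T_1), w \in V(T_2)\}$, $\Lambda_2 = \{|f(u)-f(u')|/2 : u,u' \in V(T_1)\}$, $\Lambda_3 = \{|g(w)-g(w')|/2 : w,w'\in V(T_2)\}$ and $\Lambda = \Lambda_1\cup\Lambda_2\cup\Lambda_3$. Then $d_I(T_1^f, T_2^g) \in \Lambda$.
   Context: A merge tree $T^h$ is a finite rooted tree $T$ with a continuous function $h: |T| \to \mathbb{R}$ on its underlying space (interior points of edges included) that is decreasing along every root-to-leaf path, modified by attaching to the root a ray upward along which $h$ increases to $+\infty$; $V(T)$ denotes the set of tree nodes (vertices of $T$). $u^{\varepsilon}$ is the unique ancestor of $u$ with $h(u^\varepsilon) - h(u) = \varepsilon$. For merge trees $T_1^f$, $T_2^g$, a pair of continuous maps $\alpha: |T_1| \to |T_2|$, $\beta: |T_2| \to |T_1|$ is $\varepsilon$-compatible if $g(\alpha(u)) = f(u)+\varepsilon$, $\beta(\alpha(u)) = u^{2\varepsilon}$ for all $u\in|T_1|$ and $f(\beta(w)) = g(w)+\varepsilon$, $\alpha(\beta(w)) = w^{2\varepsilon}$ for all $w \in |T_2|$; the interleaving distance $d_I(T_1^f,T_2^g)$ is the infimum of $\varepsilon$ for which such a pair exists. *)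

(* Defs.v *)
From Stdlib Require Import Reals Lra List.
Open Scope R_scope.

(* A finite rooted tree is given by a finite vertex type V, a root, and a parent
   map par (with par root = root) such that every vertex reaches the root.
   h gives the heights of the nodes; "h decreasing along every root-to-leaf path"
   is h v < h (par v) for every non-root v. *)
Record MergeTree := {
  V : Type;
  V_finite : exists l : list V, forall v : V, In v l;
  root : V;
  par : V -> V;
  par_root : par root = root;
  reach_root : forall v : V, exists n : nat, Nat.iter n par v = root;
  h : V -> R;
  h_par : forall v : V, v <> root -> h v < h (par v)
}.

Definition anc (T : MergeTree) (a v : V T) : Prop :=
  exists n : nat, Nat.iter n (par T) v = a.

(* Points of |T| (with the ray above the root attached): a point is (v, s)
   where v is the lower endpoint of the edge (v, par v) containing it (or v = root
   for points on the ray), and s its height: h v <= s < h (par v), resp. s >= h root.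
   Every edge is parametrised by height (h is strictly monotone on edges). *)
Record pt (T : MergeTree) := mkpt {
  pv : V T;
  ph : R;
  pvalid : h T pv <= ph /\ (pv = root T \/ ph < h T (par T pv))
}.
Arguments pv {T}.
Arguments ph {T}.


Definition ancp {T : MergeTree} (x y : pt T) : Prop :=
  anc T (pv y) (pv x) /\ ph x <= ph y.

Definition is_shift {T : MergeTree} (x : pt T) (eps : R) (y : pt T) : Prop :=
  ancp x y /\ ph y = ph x + eps.

(* Path-metric ball in the metric tree |T| (edge lengths = height differences):
   d(x,y) = ph x + ph y - 2 ph(lca x y) < r iff some common ancestor z has
   (ph z - ph x) + (ph z - ph y) < r. *)
Definition close {T : MergeTree} (x y : pt T) (r : R) : Prop :=
  exists z : pt T, ancp x z /\ ancp y z /\ (ph z - ph x) + (ph z - ph y) < r.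

Definition continuous_pt {T1 T2 : MergeTree} (a : pt T1 -> pt T2) : Prop :=
  forall (x : pt T1) (e : R), 0 < e ->
    exists d : R, 0 < d /\ forall y : pt T1, close x y d -> close (a x) (a y) e.

Definition compatible (T1 T2 : MergeTree) (eps : R)
  (a : pt T1 -> pt T2) (b : pt T2 -> pt T1) : Prop :=
  continuous_pt a /\ continuous_pt b /\
  (forall u : pt T1, ph (a u) = ph u + eps /\ is_shift u (2 * eps) (b (a u))) /\
  (forall w : pt T2, ph (b w) = ph w + eps /\ is_shift w (2 * eps) (a (b w))).

Definition interleaving_set (T1 T2 : MergeTree) (eps : R) : Prop :=
  0 <= eps /\ exists a b, compatible T1 T2 eps a b.

Definition is_glb (S : R -> Prop) (m : R) : Prop :=
  (forall x, S x -> m <= x) /\ (forall m', (forall x, S x -> m' <= x) -> m' <= m).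

Definition is_interleaving_distance (T1 T2 : MergeTree) (d : R) : Prop :=
  is_glb (interleaving_set T1 T2) d.

Definition Lambda (T1 T2 : MergeTree) (lam : R) : Prop :=
  (exists (u : V T1) (w : V T2), lam = Rabs (h T1 u - h T2 w)) \/
  (exists u u' : V T1, lam = Rabs (h T1 u - h T1 u') / 2) \/
  (exists w w' : V T2, lam = Rabs (h T2 w - h T2 w') / 2).

(* Main.v *)
Require Import Defs.
From Stdlib Require Import Reals Lra List ClassicalEpsilon ProofIrrelevance Classical Arith Lia.
Open Scope R_scope.

Section Tree.
Variable T : MergeTree.

Lemma anc_refl v : anc T v v.
Proof. exists 0%nat. reflexivity. Qed.

Lemma anc_trans a b c : anc T a b -> anc T b c -> anc T a c.
Proof.
  intros [n Hn] [m Hm]. exists (n + m)%nat. rewrite Nat.iter_add, Hm. exact Hn.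
Qed.

Lemma anc_par v : anc T (par T v) v.
Proof. exists 1%nat. reflexivity. Qed.

Lemma iter_root n : Nat.iter n (par T) (root T) = root T.
Proof. induction n; simpl; [reflexivity| rewrite IHn; apply par_root]. Qed.

Lemma anc_root v : anc T (root T) v.
Proof. destruct (reach_root T v) as [n Hn]. exists n. exact Hn. Qed.

Lemma h_par_le v : h T v <= h T (par T v).
Proof.
  destruct (classic (v = root T)) as [E|E].
  - subst. rewrite par_root. lra.
  - left. apply h_par. exact E.
Qed.

Lemma anc_h_le a v : anc T a v -> h T v <= h T a.
Proof.
  intros [n Hn]. subst a. induction n; simpl; [lra|].
  eapply Rle_trans; [exact IHn| apply h_par_le].
Qed.

Lemma strict_anc a v : anc T a v -> a <> v -> v <> root T /\ h T (par T v) <= h T a.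
Proof.
  intros [n Hn] Hne. destruct n as [|n].
  - simpl in Hn. congruence.
  - split.
    + intro E. subst v. rewrite iter_root in Hn. congruence.
    + apply anc_h_le. exists n. rewrite <- Nat.iter_succ_r. exact Hn.
Qed.

Lemma anc_chain a b v : anc T a v -> anc T b v -> anc T a b \/ anc T b a.
Proof.
  intros [i Hi] [j Hj]. subst.
  destruct (le_lt_dec i j) as [L|L].
  - right. exists (j - i)%nat. rewrite <- Nat.iter_add. f_equal. lia.
  - left. exists (i - j)%nat. rewrite <- Nat.iter_add. f_equal. lia.
Qed.

Lemma first_anc n v w : anc T (Nat.iter n (par T) v) w -> ~ anc T v w ->
  exists k, anc T (Nat.iter (S k) (par T) v) w /\ ~ anc T (Nat.iter k (par T) v) w /\ (k < n)%nat.
Proof.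
  induction n; intros H1 H2.
  - simpl in H1. contradiction.
  - destruct (classic (anc T (Nat.iter n (par T) v) w)) as [A|A].
    + destruct (IHn A H2) as [k [? [? ?]]]. exists k. repeat split; auto.
    + exists n. repeat split; auto.
Qed.

Lemma pt_eq (x y : pt T) : pv x = pv y -> ph x = ph y -> x = y.
Proof.
  destruct x as [vx hx px], y as [vy hy py]; simpl. intros -> ->.
  f_equal. apply proof_irrelevance.
Qed.

Lemma ancp_refl (x : pt T) : ancp x x.
Proof. split; [apply anc_refl| lra]. Qed.

Lemma ancp_trans (x y z : pt T) : ancp x y -> ancp y z -> ancp x z.
Proof.
  intros [A1 B1] [A2 B2]. split; [eapply anc_trans; eauto| lra].
Qed.

Lemma pvalid_lt (x : pt T) : pv x <> root T -> ph x < h T (par T (pv x)).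
Proof. intros H. destruct (pvalid T x) as [_ [E|E]]; [contradiction|exact E]. Qed.

Lemma pvalid_le (x : pt T) : h T (pv x) <= ph x.
Proof. apply (pvalid T x). Qed.

Definition comparable (x y : pt T) := ancp x y \/ ancp y x.

Lemma vert_cmp (p q : pt T) : anc T (pv p) (pv q) -> comparable p q.
Proof.
  intros A. destruct (classic (pv p = pv q)) as [E|E].
  - destruct (Rle_dec (ph p) (ph q)).
    + left. split; [rewrite E; apply anc_refl| lra].
    + right. split; [rewrite E; apply anc_refl| lra].
  - destruct (strict_anc _ _ A E) as [N L].
    pose proof (pvalid_lt q N). pose proof (pvalid_le p).
    right. split; [exact A| lra].
Qed.

Lemma anc_cmp (x y1 y2 : pt T) : ancp x y1 -> ancp x y2 -> ph y1 <= ph y2 -> ancp y1 y2.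
Proof.
  intros [A1 _] [A2 _] L.
  destruct (anc_chain _ _ _ A1 A2) as [C|C].
  - destruct (classic (pv y1 = pv y2)) as [E|E].
    + split; [rewrite E; apply anc_refl| lra].
    + destruct (strict_anc _ _ C E) as [N L2].
      pose proof (pvalid_lt y2 N). pose proof (pvalid_le y1). lra.
  - split; [exact C| exact L].
Qed.

Lemma ancp_uniq (x y1 y2 : pt T) : ancp x y1 -> ancp x y2 -> ph y1 = ph y2 -> y1 = y2.
Proof.
  intros A1 A2 E.
  apply pt_eq; [|exact E].
  destruct (anc_chain _ _ _ (proj1 A1) (proj1 A2)) as [C|C];
  destruct (classic (pv y1 = pv y2)) as [Q|Q]; auto.
  - destruct (strict_anc _ _ C Q) as [N L2].
    pose proof (pvalid_lt y2 N). pose proof (pvalid_le y1). lra.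
  - assert (Q' : pv y2 <> pv y1) by auto.
    destruct (strict_anc _ _ C Q') as [N L2].
    pose proof (pvalid_lt y1 N). pose proof (pvalid_le y2). lra.
Qed.

Lemma ancp_antisym (x y : pt T) : ancp x y -> ph y <= ph x -> y = x.
Proof.
  intros A L. apply (ancp_uniq x); [exact A| apply ancp_refl| destruct A; lra].
Qed.

Lemma cmp_le (p q : pt T) : comparable p q -> ph p <= ph q -> ancp p q.
Proof.
  intros [C|C] L; [exact C|].
  assert (p = q). { symmetry. apply (ancp_uniq q); [apply ancp_refl|exact C| destruct C; lra]. }
  subst. apply ancp_refl.
Qed.

Lemma exists_up_v n : forall v, Nat.iter n (par T) v = root T -> forall t, h T v <= t ->
  exists y : pt T, anc T (pv y) v /\ ph y = t.
Proof.
  induction n; intros v Hv t Ht.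
  - simpl in Hv. subst v.
    assert (P : h T (root T) <= t /\ (root T = root T \/ t < h T (par T (root T)))) by (split; auto).
    exists (mkpt T (root T) t P). split; [apply anc_refl| reflexivity].
  - destruct (Rlt_dec t (h T (par T v))) as [L|L].
    + assert (P : h T v <= t /\ (v = root T \/ t < h T (par T v))) by (split; auto).
      exists (mkpt T v t P). split; [apply anc_refl|reflexivity].
    + rewrite Nat.iter_succ_r in Hv.
      destruct (IHn (par T v) Hv t) as [y [A E]]; [lra|].
      exists y. split; [eapply anc_trans; [exact A| apply anc_par]| exact E].
Qed.

Lemma exists_up (x : pt T) t : ph x <= t -> exists y, ancp x y /\ ph y = t.
Proof.
  intros L. destruct (reach_root T (pv x)) as [n Hn].
  destruct (exists_up_v n (pv x) Hn t) as [y [A E]].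
  { pose proof (pvalid_le x). lra. }
  exists y. split; [split; [exact A| lra]| exact E].
Qed.

Definition vpt (v : V T) : pt T.
Proof.
  refine (mkpt T v (h T v) _).
  split; [lra|]. destruct (classic (v = root T)) as [E|E]; [left; exact E| right; apply h_par; exact E].
Defined.

Lemma lca (p q P : pt T) : ancp p P -> ancp q P ->
  comparable p q \/ exists m, ancp p (vpt m) /\ ancp q (vpt m) /\ h T m <= ph P /\ ph p < h T m.
Proof.
  intros [Ap Lp] [Aq Lq].
  destruct (classic (anc T (pv p) (pv q))) as [C|C]; [left; apply vert_cmp; exact C|].
  destruct (classic (anc T (pv q) (pv p))) as [C'|C'].
  { left. destruct (vert_cmp q p C'); [right|left]; assumption. }
  right.
  destruct Ap as [n Hn].
  assert (A1 : anc T (Nat.iter n (par T) (pv p)) (pv q)) by (rewrite Hn; exact Aq).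
  destruct (first_anc n (pv p) (pv q) A1 C) as [k [M1 [M2 Mk]]].
  set (m := Nat.iter (S k) (par T) (pv p)) in *.
  exists m.
  assert (Np : pv p <> root T). { intro E. apply C. rewrite E. apply anc_root. }
  assert (Amp : anc T m (pv p)) by (exists (S k); reflexivity).
  assert (Hm1 : ph p < h T m).
  { pose proof (pvalid_lt p Np). assert (h T (par T (pv p)) <= h T m).
    { apply anc_h_le. exists k. unfold m. rewrite Nat.iter_succ_r. reflexivity. } lra. }
  split; [split; [exact Amp| simpl; lra]|].
  split.
  { split; [exact M1|]. simpl.
    assert (Q : m <> pv q). { intro E. apply C'. rewrite <- E. exact Amp. }
    destruct (strict_anc _ _ M1 Q) as [N L]. pose proof (pvalid_lt q N). lra. }
  split; [|exact Hm1].
  assert (anc T (pv P) m).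
  { destruct (le_lt_dec n k) as [L|L]; [lia|].
    exists (n - S k)%nat. unfold m. rewrite <- Nat.iter_add.
    replace (n - S k + S k)%nat with n by lia. exact Hn. }
  pose proof (anc_h_le _ _ H). pose proof (pvalid_le P). lra.
Qed.

End Tree.

Lemma gap_list (T : MergeTree) (p : pt T) (l : list (V T)) :
  exists e, 0 < e /\ forall m, In m l -> ph p < h T m -> e <= h T m - ph p.
Proof.
  induction l as [|m0 l IH].
  - exists 1. split; [lra| intros m []].
  - destruct IH as [e [He H]].
    destruct (Rlt_dec (ph p) (h T m0)) as [L|L].
    + exists (Rmin e (h T m0 - ph p)). split; [apply Rmin_pos; lra|].
      intros m [E|I] Lm.
      * subst. apply Rmin_r.
      * eapply Rle_trans; [apply Rmin_l| apply H; auto].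
    + exists e. split; [exact He|]. intros m [E|I] Lm; [subst; lra| apply H; auto].
Qed.

Lemma gap (T : MergeTree) (p : pt T) : exists e, 0 < e /\ forall q, close p q e -> comparable T p q.
Proof.
  destruct (V_finite T) as [l Hl].
  destruct (gap_list T p l) as [e [He H]].
  exists e. split; [exact He|]. intros q [z [Az [Bz Lz]]].
  destruct (lca T p q z Az Bz) as [C|[m [_ [_ [L1 L2]]]]]; [exact C|].
  pose proof (H m (Hl m) L2). destruct Bz. lra.
Qed.

Definition monotone {T1 T2 : MergeTree} (a : pt T1 -> pt T2) :=
  forall x y, ancp x y -> ancp (a x) (a y).

Definition hshift {T1 T2 : MergeTree} (a : pt T1 -> pt T2) (e : R) :=
  forall x, ph (a x) = ph x + e.

Lemma mono_cont {T1 T2 : MergeTree} (a : pt T1 -> pt T2) e :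
  monotone a -> hshift a e -> continuous_pt a.
Proof.
  intros M S x r Hr. exists r. split; [exact Hr|].
  intros y [z [Az [Bz L]]]. exists (a z). split; [apply M; auto|]. split; [apply M; auto|].
  rewrite !S. lra.
Qed.

Lemma close_anc {T : MergeTree} (x y : pt T) d : ancp x y -> ph y - ph x < d -> close x y d.
Proof.
  intros A L. exists y. split; [exact A| split; [apply ancp_refl| lra]].
Qed.

Lemma cont_mono {T1 T2 : MergeTree} (a : pt T1 -> pt T2) e :
  continuous_pt a -> hshift a e -> monotone a.
Proof.
  intros Hc S.
  assert (Loc : forall x y, ancp x y -> exists d, 0 < d /\ forall y', ancp x y' ->
            Rabs (ph y' - ph y) < d -> comparable T2 (a y) (a y')).
  { intros x y Ay. destruct (gap T2 (a y)) as [g [Hg G]].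
    destruct (Hc y g Hg) as [d [Hd D]]. exists d. split; [exact Hd|].
    intros y' Ay' L. apply G. apply D.
    destruct (Rle_dec (ph y) (ph y')) as [L1|L1].
    - apply close_anc; [apply (anc_cmp T1 x); auto|].
      rewrite Rabs_right in L; lra.
    - exists y. split; [apply ancp_refl|]. split; [apply (anc_cmp T1 x); auto; lra|].
      rewrite Rabs_left1 in L; lra. }
  assert (Up : forall p q, comparable T2 p q -> ph p <= ph q -> ancp p q) by (intros; apply cmp_le; auto).
  intros x.
  set (P := fun t => forall y, ancp x y -> ph y = t -> ancp (a x) (a y)).
  assert (Main : forall t1, ph x <= t1 -> P t1).
  { intros t1 Ht1.
    set (E := fun t => ph x <= t <= t1 /\ forall t', ph x <= t' <= t -> P t').
    assert (Px : P (ph x)).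
    { intros y Ay Ey. assert (y = x) by (apply ancp_antisym; auto; lra). subst; apply ancp_refl. }
    destruct (completeness E) as [s [Hs1 Hs2]].
    { exists t1. intros t [Et _]. lra. }
    { exists (ph x). split; [lra|]. intros t' Ht'. replace t' with (ph x) by lra. exact Px. }
    assert (Ex : E (ph x)). { split; [lra|]. intros t' Ht'. replace t' with (ph x) by lra. exact Px. }
    assert (Hsx : ph x <= s) by (apply Hs1; exact Ex).
    assert (Hst : s <= t1) by (apply Hs2; intros t [Et _]; lra).
    assert (Below : forall t', ph x <= t' < s -> P t').
    { intros t' Ht'. apply NNPP. intro N.
      assert (is_upper_bound E t').
      { intros t [Et Ht]. destruct (Rle_dec t t') as [L|L]; [exact L|].
        exfalso. apply N. apply Ht. lra. }
      pose proof (Hs2 t' H). lra. }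
    destruct (exists_up T1 x s Hsx) as [ys [Ays Eys]].
    destruct (Loc x ys Ays) as [d [Hd D]].
    assert (Ps : P s).
    { intros y Ay Ey. assert (y = ys) by (apply (ancp_uniq T1 x); auto; lra). subst y.
      assert (exists t'', E t'' /\ s - d < t'').
      { apply NNPP. intro N.
        assert (is_upper_bound E (s - d)).
        { intros t Et. destruct (Rle_dec t (s - d)); [auto|]. exfalso. apply N. exists t. split; auto; lra. }
        pose proof (Hs2 _ H). lra. }
      destruct H as [t'' [[Et1 Et2] Lt]].
      assert (Lts : t'' <= s) by (apply Hs1; split; auto).
      destruct (exists_up T1 x t'' (proj1 Et1)) as [y'' [Ay'' Ey'']].
      pose proof (Et2 t'' (conj (proj1 Et1) (Rle_refl _)) y'' Ay'' Ey'').
      eapply ancp_trans; [exact H|]. apply Up.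
      - destruct (D y'' Ay''); [|right; auto|left; auto]. rewrite Rabs_left1; lra.
      - rewrite !S. lra. }
    destruct (Rle_lt_dec t1 s) as [L|L].
    { replace t1 with s by lra. exact Ps. }
    exfalso.
    set (t2 := Rmin (s + d / 2) t1).
    assert (E t2).
    { split; [unfold t2; split; [apply Rmin_glb; lra| apply Rmin_r]|].
      intros t' Ht'. destruct (Rlt_le_dec t' s) as [L1|L1]; [apply Below; lra|].
      destruct (Rle_lt_dec t' s) as [L2|L2]; [replace t' with s by lra; exact Ps|].
      intros y Ay Ey. eapply ancp_trans; [apply (Ps ys Ays Eys)|]. apply Up.
      - apply D; auto. assert (t2 <= s + d/2) by apply Rmin_l. rewrite Rabs_right; lra.
      - rewrite !S. lra. }
    pose proof (Hs1 _ H). assert (s < t2) by (unfold t2; apply Rmin_glb_lt; lra). lra. }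
  intros y Ay. apply (Main (ph y)); auto. destruct Ay; lra.
Qed.

Definition mkV {A B : MergeTree} (a : pt A -> pt B) (e' : R) (v : V A) : pt B :=
  epsilon (inhabits (a (vpt A v))) (fun y => pv y = pv (a (vpt A v)) /\ ph y = h A v + e').

Definition mk {A B : MergeTree} (a : pt A -> pt B) (e' : R) (u : pt A) : pt B :=
  epsilon (inhabits (a u)) (fun y => ancp (mkV a e' (pv u)) y /\ ph y = ph u + e').

Section Mk.
Variables A B : MergeTree.
Variable a : pt A -> pt B.
Variables e e' : R.
Hypothesis He : e' <= e.
Hypothesis Sa : hshift a e.
Hypothesis Ma : monotone a.
Hypothesis HV : forall v, h B (pv (a (vpt A v))) <= h A v + e'.

Lemma mkV_spec v : pv (mkV a e' v) = pv (a (vpt A v)) /\ ph (mkV a e' v) = h A v + e'.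
Proof.
  unfold mkV. apply epsilon_spec.
  set (w := pv (a (vpt A v))).
  assert (P : h B w <= h A v + e' /\ (w = root B \/ h A v + e' < h B (par B w))).
  { split; [apply HV|]. destruct (classic (w = root B)) as [E|E]; [left; auto| right].
    pose proof (pvalid_lt B (a (vpt A v)) E). rewrite Sa in H. simpl in H. fold w in H. lra. }
  exists (mkpt B w (h A v + e') P). split; reflexivity.
Qed.

Lemma mk_spec u : ancp (mkV a e' (pv u)) (mk a e' u) /\ ph (mk a e' u) = ph u + e'.
Proof.
  unfold mk. apply epsilon_spec. apply exists_up.
  rewrite (proj2 (mkV_spec _)). pose proof (pvalid_le A u). lra.
Qed.

Lemma mk_shift : hshift (mk a e') e'.
Proof. intro u. apply mk_spec. Qed.

Lemma mkV_step v : ancp (mkV a e' v) (mkV a e' (par A v)).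
Proof.
  destruct (mkV_spec v) as [P1 H1]. destruct (mkV_spec (par A v)) as [P2 H2].
  assert (ancp (vpt A v) (vpt A (par A v))).
  { split; simpl; [apply anc_par| apply h_par_le]. }
  destruct (Ma _ _ H) as [An _]. split.
  - rewrite P1, P2. exact An.
  - rewrite H1, H2. pose proof (h_par_le A v). lra.
Qed.

Lemma mkV_mono p c : anc A p c -> ancp (mkV a e' c) (mkV a e' p).
Proof.
  intros [n Hn]. subst p. induction n.
  - apply ancp_refl.
  - eapply ancp_trans; [exact IHn|]. simpl. apply mkV_step.
Qed.

Lemma mk_mono : monotone (mk a e').
Proof.
  intros x y Axy.
  destruct (mk_spec x) as [Ax Hx]. destruct (mk_spec y) as [Ay Hy].
  assert (ancp (mkV a e' (pv x)) (mk a e' y)).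
  { eapply ancp_trans; [apply mkV_mono; apply Axy| exact Ay]. }
  apply (anc_cmp B (mkV a e' (pv x))); auto. rewrite Hx, Hy. destruct Axy; lra.
Qed.

End Mk.

Section Half.
Variables A B : MergeTree.
Variable a : pt A -> pt B.
Variable b : pt B -> pt A.
Variables e e' : R.
Hypothesis He : e' <= e.
Hypothesis He0 : 0 <= e'.
Hypothesis Sa : hshift a e.
Hypothesis Sb : hshift b e.
Hypothesis Ma : monotone a.
Hypothesis Mb : monotone b.
Hypothesis BA : forall u, ancp u (b (a u)).
Hypothesis HVa : forall v, h B (pv (a (vpt A v))) <= h A v + e'.
Hypothesis HVb : forall w, h A (pv (b (vpt B w))) <= h B w + e'.
Hypothesis HL : forall v m, h A v < h A m -> h A m <= h A v + 2 * e -> h A m <= h A v + 2 * e'.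

Lemma half_vertex v : ancp (vpt A v) (mk b e' (mkV a e' v)).
Proof.
  set (y := mkV a e' v).
  destruct (mkV_spec A B a e e' He Sa HVa v) as [Py Hy]. fold y in Py, Hy.
  set (w := pv (a (vpt A v))) in *.
  set (Q := mkV b e' (pv y)).
  destruct (mkV_spec B A b e e' He Sb HVb (pv y)) as [PQ HQ]. fold Q in PQ, HQ.
  destruct (mk_spec B A b e e' He Sb HVb y) as [AB HB].
  set (B' := mk b e' y) in *.
  set (P := b (a (vpt A v))).
  assert (AvP : ancp (vpt A v) P) by apply BA.
  assert (HP : ph P = h A v + 2 * e) by (unfold P; rewrite Sb, Sa; simpl; lra).
  assert (QP : ancp Q P).
  { assert (ancp (vpt B w) (a (vpt A v))).
    { split; [simpl; apply anc_refl| simpl; apply pvalid_le]. }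
    pose proof (Mb _ _ H). eapply ancp_trans; [|exact H0].
    split; [rewrite PQ, Py; apply anc_refl|]. rewrite HQ, Sb, Py. simpl. lra. }
  rewrite Py in HQ. pose proof (HVa v) as Hw. fold w in Hw.
  destruct (lca A (vpt A v) Q P AvP QP) as [[C|C]|[m [M1 [M2 [M3 M4]]]]].
  - eapply ancp_trans; [exact C| exact AB].
  - apply (anc_cmp A Q); auto. rewrite HB, Hy. simpl. lra.
  - eapply ancp_trans; [exact M1|]. apply (anc_cmp A Q); auto.
    rewrite HB, Hy. simpl in *. pose proof (HL v m M4). lra.
Qed.

Lemma half u : is_shift u (2 * e') (mk b e' (mk a e' u)).
Proof.
  destruct (mk_spec A B a e e' He Sa HVa u) as [A1 H1].
  destruct (mk_spec B A b e e' He Sb HVb (mk a e' u)) as [_ H2].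
  split; [|lra].
  pose proof (mk_mono B A b e e' He Sb Mb HVb _ _ A1) as M.
  pose proof (half_vertex (pv u)).
  assert (ancp (vpt A (pv u)) (mk b e' (mk a e' u))) by (eapply ancp_trans; eauto).
  apply (anc_cmp A (vpt A (pv u))); auto.
  - split; [apply anc_refl| apply pvalid_le].
  - lra.
Qed.

End Half.

Lemma key (T1 T2 : MergeTree) eps eps' : 0 <= eps' -> eps' <= eps ->
  interleaving_set T1 T2 eps ->
  (forall l, Lambda T1 T2 l -> ~ (eps' < l /\ l <= eps)) ->
  interleaving_set T1 T2 eps'.
Proof.
  intros H0 H1 [_ [a [b [Ca [Cb [Hab Hba]]]]]] HL.
  assert (Sa : hshift a eps) by (intro u; apply Hab).
  assert (Sb : hshift b eps) by (intro u; apply Hba).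
  pose proof (cont_mono a eps Ca Sa) as Ma.
  pose proof (cont_mono b eps Cb Sb) as Mb.
  assert (BA : forall u, ancp u (b (a u))) by (intro u; apply Hab).
  assert (AB : forall u, ancp u (a (b u))) by (intro u; apply Hba).
  assert (HVa : forall v, h T2 (pv (a (vpt T1 v))) <= h T1 v + eps').
  { intro v. pose proof (pvalid_le T2 (a (vpt T1 v))). rewrite Sa in H. simpl in H.
    destruct (Rle_dec (h T2 (pv (a (vpt T1 v)))) (h T1 v + eps')) as [L|L]; [exact L|].
    exfalso. apply (HL (Rabs (h T1 v - h T2 (pv (a (vpt T1 v)))))).
    - left. eauto.
    - rewrite Rabs_left; lra. }
  assert (HVb : forall w, h T1 (pv (b (vpt T2 w))) <= h T2 w + eps').
  { intro w. pose proof (pvalid_le T1 (b (vpt T2 w))). rewrite Sb in H. simpl in H.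
    destruct (Rle_dec (h T1 (pv (b (vpt T2 w)))) (h T2 w + eps')) as [L|L]; [exact L|].
    exfalso. apply (HL (Rabs (h T1 (pv (b (vpt T2 w))) - h T2 w))).
    - left. eauto.
    - rewrite Rabs_right; lra. }
  assert (HL1 : forall v m, h T1 v < h T1 m -> h T1 m <= h T1 v + 2 * eps -> h T1 m <= h T1 v + 2 * eps').
  { intros v m L1 L2. destruct (Rle_dec (h T1 m) (h T1 v + 2 * eps')) as [L|L]; [exact L|].
    exfalso. apply (HL (Rabs (h T1 m - h T1 v) / 2)).
    - right; left. eauto.
    - rewrite Rabs_right; lra. }
  assert (HL2 : forall v m, h T2 v < h T2 m -> h T2 m <= h T2 v + 2 * eps -> h T2 m <= h T2 v + 2 * eps').
  { intros v m L1 L2. destruct (Rle_dec (h T2 m) (h T2 v + 2 * eps')) as [L|L]; [exact L|].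
    exfalso. apply (HL (Rabs (h T2 m - h T2 v) / 2)).
    - right; right. eauto.
    - rewrite Rabs_right; lra. }
  split; [exact H0|].
  exists (mk a eps'), (mk b eps').
  split; [apply (mono_cont _ eps'); [apply (mk_mono T1 T2 a eps eps'); auto| apply (mk_shift T1 T2 a eps eps'); auto]|].
  split; [apply (mono_cont _ eps'); [apply (mk_mono T2 T1 b eps eps'); auto| apply (mk_shift T2 T1 b eps eps'); auto]|].
  split.
  - intro u. split; [apply (mk_shift T1 T2 a eps eps'); auto|].
    apply (half T1 T2 a b eps eps'); auto.
  - intro w. split; [apply (mk_shift T2 T1 b eps eps'); auto|].
    apply (half T2 T1 b a eps eps'); auto.
Qed.

Lemma h_lower (T : MergeTree) : exists m, forall v, m <= h T v.
Proof.
  destruct (V_finite T) as [l Hl].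
  assert (forall l : list (V T), exists m, forall v, In v l -> m <= h T v).
  { induction l0 as [|x l0 [m Hm]]; [exists 0; intros v []|].
    exists (Rmin m (h T x)). intros v [E|I]; [subst; apply Rmin_r|].
    eapply Rle_trans; [apply Rmin_l| auto]. }
  destruct (H l) as [m Hm]. exists m. intro v. apply Hm, Hl.
Qed.

Definition rpt (T : MergeTree) (t : R) (H : h T (root T) <= t) : pt T :=
  mkpt T (root T) t (conj H (or_introl eq_refl)).

Lemma nonempty (T1 T2 : MergeTree) : exists E, interleaving_set T1 T2 E.
Proof.
  destruct (h_lower T1) as [m1 H1]. destruct (h_lower T2) as [m2 H2].
  set (E := Rmax 0 (Rmax (h T2 (root T2) - m1) (h T1 (root T1) - m2))).
  assert (E0 : 0 <= E) by apply Rmax_l.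
  assert (E1 : h T2 (root T2) - m1 <= E) by (eapply Rle_trans; [apply Rmax_l| apply Rmax_r]).
  assert (E2 : h T1 (root T1) - m2 <= E) by (eapply Rle_trans; [apply Rmax_r| apply Rmax_r]).
  assert (Ba : forall u : pt T1, h T2 (root T2) <= ph u + E).
  { intro u. pose proof (pvalid_le T1 u). pose proof (H1 (pv u)). lra. }
  assert (Bb : forall u : pt T2, h T1 (root T1) <= ph u + E).
  { intro u. pose proof (pvalid_le T2 u). pose proof (H2 (pv u)). lra. }
  set (a := fun u => rpt T2 (ph u + E) (Ba u)).
  set (b := fun u => rpt T1 (ph u + E) (Bb u)).
  assert (Ma : monotone a).
  { intros x y [_ L]. split; [apply anc_refl| simpl; lra]. }
  assert (Mb : monotone b).
  { intros x y [_ L]. split; [apply anc_refl| simpl; lra]. }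
  exists E. split; [exact E0|]. exists a, b.
  split; [apply (mono_cont a E); auto; intro; reflexivity|].
  split; [apply (mono_cont b E); auto; intro; reflexivity|].
  split.
  - intro u. split; [reflexivity|]. split; [split; [apply anc_root| simpl; lra]| simpl; lra].
  - intro u. split; [reflexivity|]. split; [split; [apply anc_root| simpl; lra]| simpl; lra].
Qed.

Definition LL (T1 T2 : MergeTree) (l1 : list (V T1)) (l2 : list (V T2)) : list R :=
  map (fun p => Rabs (h T1 (fst p) - h T2 (snd p))) (list_prod l1 l2) ++
  map (fun p => Rabs (h T1 (fst p) - h T1 (snd p)) / 2) (list_prod l1 l1) ++
  map (fun p => Rabs (h T2 (fst p) - h T2 (snd p)) / 2) (list_prod l2 l2).

Lemma LL_in T1 T2 l1 l2 : (forall v, In v l1) -> (forall v, In v l2) ->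
  forall l, Lambda T1 T2 l -> In l (LL T1 T2 l1 l2).
Proof.
  intros H1 H2 l [[u [w E]]|[[u [u' E]]|[w [w' E]]]]; subst; unfold LL;
  repeat rewrite in_app_iff.
  - left. apply (in_map (fun p => Rabs (h T1 (fst p) - h T2 (snd p))) _ (u, w)). apply in_prod; auto.
  - right; left. apply (in_map (fun p => Rabs (h T1 (fst p) - h T1 (snd p)) / 2) _ (u, u')). apply in_prod; auto.
  - right; right. apply (in_map (fun p => Rabs (h T2 (fst p) - h T2 (snd p)) / 2) _ (w, w')). apply in_prod; auto.
Qed.

Lemma sep (L : list R) (d : R) : exists r, 0 < r /\ forall x, In x L -> x <> d -> r <= Rabs (x - d).
Proof.
  induction L as [|x0 L [r [Hr H]]]; [exists 1; split; [lra| intros x []]|].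
  destruct (Req_dec x0 d) as [E|E].
  - exists r. split; auto. intros x [F|I] N; [subst; contradiction| auto].
  - exists (Rmin r (Rabs (x0 - d))). split.
    + apply Rmin_pos; auto. apply Rabs_pos_lt. lra.
    + intros x [F|I] N; [subst; apply Rmin_r|]. eapply Rle_trans; [apply Rmin_l| auto].
Qed.

Theorem lemma4 (T1 T2 : MergeTree) :
  exists d : R, is_interleaving_distance T1 T2 d /\ Lambda T1 T2 d.
Proof.
  set (S := interleaving_set T1 T2).
  destruct (nonempty T1 T2) as [E0 HE0].
  destruct (completeness (fun x => S (- x))) as [m [Hm1 Hm2]].
  { exists 0. intros x [Hx _]. lra. }
  { exists (- E0). unfold S. rewrite Ropp_involutive. exact HE0. }
  set (d := - m).
  assert (G1 : forall x, S x -> d <= x).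
  { intros x Hx. assert (- x <= m) by (apply Hm1; rewrite Ropp_involutive; exact Hx). unfold d; lra. }
  assert (G2 : forall m', (forall x, S x -> m' <= x) -> m' <= d).
  { intros m' H. assert (m <= - m').
    { apply Hm2. intros x Hx. pose proof (H _ Hx). lra. } unfold d; lra. }
  exists d. split; [split; auto|].
  apply NNPP. intro ND.
  assert (Hd0 : 0 <= d) by (apply G2; intros x [Hx _]; exact Hx).
  assert (Hdpos : 0 < d).
  { destruct Hd0 as [|Z]; auto. exfalso. apply ND. right; left. exists (root T1), (root T1).
    rewrite <- Z. unfold Rminus. rewrite Rplus_opp_r, Rabs_R0. lra. }
  destruct (V_finite T1) as [l1 Hl1]. destruct (V_finite T2) as [l2 Hl2].
  destruct (sep (LL T1 T2 l1 l2) d) as [r [Hr Hsep]].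
  assert (exists eps, S eps /\ eps < d + r).
  { apply NNPP. intro N. assert (d + r <= d).
    { apply G2. intros x Hx. destruct (Rle_dec (d + r) x); auto. exfalso. apply N. exists x; split; auto; lra. }
    lra. }
  destruct H as [eps [Seps Leps]].
  pose proof (G1 _ Seps).
  set (eps' := Rmax (d - r / 2) (d / 2)).
  assert (eps' < d) by (apply Rmax_lub_lt; lra).
  assert (d - r / 2 <= eps') by apply Rmax_l.
  assert (d / 2 <= eps') by apply Rmax_r.
  assert (S eps').
  { apply (key T1 T2 eps eps'); auto; try lra.
    intros l Hl [L1 L2].
    assert (l <> d) by (intro Z; subst; contradiction).
    pose proof (Hsep l (LL_in T1 T2 l1 l2 Hl1 Hl2 l Hl) H3).
    assert (Rabs (l - d) < r) by (apply Rabs_def1; lra). lra. }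
  pose proof (G1 _ H3). lra.
Qed.
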